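(* Let $R$ be a commutative Artinian ring, $M$ a non-zero $R$-module, and $M=\sum_{i=1}^n K_i$ a minimal PS-hollow representation of $M$, where $K_i$ is $H_i$-PS-hollow for each $i$. Suppose that every nonzero submodule of $In(K_i)$ is $H_i$-PS-hollow for all $i\in\{1,\dots,n\}$. Then $M=\bigoplus_{i=1}^n K_i$.
   Context: An $R$-submodule $N\leq M$ is PS-hollow iff for every ideal $I\leq R$ and every submodule $L\leq M$: $N\subseteq IM+L$ implies $N\subseteq IM$ or $N\subseteq L$. For PS-hollow $N$: $A_N=\{I\leq R: N\subseteq IM\}$, $H_N$ the set of minimal elements of $A_N$, $In(N)=\bigcap_{I\in H_N}IM$ ($=M$ if $H_N=\emptyset$); $N$ is $H$-PS-hollow iff PS-hollow with $H_N=H$. A minimal PS-hollow representation is $M=\sum_{i=1}^n K_i$ with each $K_i$ $H_i$-PS-hollow, $In(K_1),\dots,In(K_n)$ pairwise incomparable, and $K_j\not\subseteq\sum_{i\neq j}K_i$ for all $j$. *)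

(* Defs.v *)
From HB Require Import structures.
From mathcomp Require Import all_boot all_algebra.
From mathcomp Require Import boolp classical_sets.
Set Implicit Arguments. Unset Strict Implicit. Unset Printing Implicit Defensive.
Import GRing.Theory.
Local Open Scope ring_scope.
Local Open Scope classical_set_scope.

Section PS.
Variables (R : comNzRingType) (M : lmodType R).

Definition is_ideal (I : set R) : Prop :=
  I 0 /\ (forall a b, I a -> I b -> I (a + b)) /\ (forall r a, I a -> I (r * a)).

Definition is_submod (N : set M) : Prop :=
  N 0 /\ (forall x y, N x -> N y -> N (x + y)) /\ (forall r x, N x -> N (r *: x)).

Definition artinian : Prop :=
  forall f : nat -> set R, (forall k, is_ideal (f k)) ->
    (forall k, f k.+1 `<=` f k) -> exists k, forall m, (k <= m)%N -> f m = f k.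

Definition IM (I : set R) : set M :=
  [set x | exists s : seq (R * M), (forall p, p \in s -> I p.1) /\
                                   x = \sum_(p <- s) p.1 *: p.2].

Definition sum2 (N L : set M) : set M :=
  [set x | exists a b, N a /\ L b /\ x = a + b].

Definition sumfam (n : nat) (K : 'I_n -> set M) (P : pred 'I_n) : set M :=
  [set x | exists f : 'I_n -> M, (forall i, P i -> K i (f i)) /\
                                x = \sum_(i < n | P i) f i].

Definition PS_hollow (N : set M) : Prop :=
  is_submod N /\
  forall (I : set R) (L : set M), is_ideal I -> is_submod L ->
    N `<=` sum2 (IM I) L -> N `<=` IM I \/ N `<=` L.

Definition A_N (N : set M) : set (set R) := [set I | is_ideal I /\ N `<=` IM I].

Definition H_N (N : set M) : set (set R) :=
  [set I | A_N N I /\ forall J, A_N N J -> J `<=` I -> J = I].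

(* In(N) = intersection of IM over I in H_N (= M when H_N is empty) *)
Definition In_ (N : set M) : set M := [set x | forall I, H_N N I -> IM I x].

Definition H_PS_hollow (H : set (set R)) (N : set M) : Prop :=
  PS_hollow N /\ H_N N = H.

Definition min_PS_hollow_rep (n : nat) (K : 'I_n -> set M)
    (H : 'I_n -> set (set R)) : Prop :=
  sumfam K predT = setT /\
  (forall i, H_PS_hollow (H i) (K i)) /\
  (forall i j, i != j -> ~ (In_ (K i) `<=` In_ (K j))) /\
  (forall j, ~ (K j `<=` sumfam K (fun i => i != j))).

Definition is_direct_sum (n : nat) (K : 'I_n -> set M) : Prop :=
  sumfam K predT = setT /\
  forall j, K j `&` sumfam K (fun i => i != j) = [set 0].

End PS.

(* Main.v *)
Require Import Defs.
From HB Require Import structures.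
From mathcomp Require Import all_boot all_algebra.
From mathcomp Require Import boolp classical_sets.
Import GRing.Theory.
Set Implicit Arguments. Unset Strict Implicit.
Local Open Scope ring_scope.
Local Open Scope classical_set_scope.

Section Aux.
Variables (R : comNzRingType) (M : lmodType R).

Lemma IM_submod (I : set R) : is_ideal I -> is_submod (IM (M:=M) I).
Proof.
move=> [I0 [ID IZ]]; split; [|split].
- by exists [::]; split => //; rewrite big_nil.
- move=> x y [s [hs ->]] [t [ht ->]]; exists (s ++ t); split; last by rewrite big_cat.
  by move=> p; rewrite mem_cat => /orP[/hs|/ht].
- move=> r x [s [hs ->]]; exists [seq (r * p.1, p.2) | p <- s]; split.
  + by move=> p /mapP[q /hs Hq ->]; apply: IZ.
  + by rewrite scaler_sumr big_map; apply: eq_bigr => p _; rewrite scalerA.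
Qed.

Lemma IM_mono (I J : set R) : J `<=` I -> IM (M:=M) J `<=` IM I.
Proof. by move=> JI x [s [hs ->]]; exists s; split => // p /hs /JI. Qed.

Lemma sub_IMT (N : set M) : N `<=` IM setT.
Proof. by move=> x _; exists [:: (1, x)]; split => //; rewrite big_seq1 scale1r. Qed.

Lemma idealT : is_ideal (@setT R).
Proof. by []. Qed.

Lemma sum2_submod (N L : set M) : is_submod N -> is_submod L -> is_submod (sum2 N L).
Proof.
move=> [N0 [ND NZ]] [L0 [LD LZ]]; split; [|split].
- by exists 0, 0; rewrite addr0.
- move=> x y [a [b [Na [Lb ->]]]] [c [d [Nc [Ld ->]]]].
  exists (a + c), (b + d); split; [exact: ND|split; [exact: LD|]].
  by rewrite addrACA.
- move=> r x [a [b [Na [Lb ->]]]]; exists (r *: a), (r *: b).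
  by split; [exact: NZ|split; [exact: LZ|rewrite scalerDr]].
Qed.

Lemma sumfam_submod n (K : 'I_n -> set M) P :
  (forall i, is_submod (K i)) -> is_submod (sumfam K P).
Proof.
move=> hK; split; [|split].
- exists (fun=> 0); split; first by move=> i _; case: (hK i).
  by rewrite big1.
- move=> x y [f [hf ->]] [g [hg ->]]; exists (fun i => f i + g i); split.
  + by move=> i Pi; case: (hK i) => _ [hD _]; apply: hD; [apply: hf|apply: hg].
  + by rewrite big_split.
- move=> r x [f [hf ->]]; exists (fun i => r *: f i); split.
  + by move=> i Pi; case: (hK i) => _ [_ hZ]; apply: hZ; apply: hf.
  + by rewrite scaler_sumr.
Qed.

Fixpoint sumL (s : seq (set M)) : set M :=
  if s is A :: s' then sum2 A (sumL s') else [set 0].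

Lemma sumL_submod (s : seq (set M)) : (forall A, A \in s -> is_submod A) ->
  is_submod (sumL s).
Proof.
elim: s => [|A s IH] hs /=.
- split; first by []. split.
  + by move=> x y -> ->; rewrite addr0.
  + by move=> r x ->; rewrite scaler0.
- apply: sum2_submod; first by apply: hs; rewrite mem_head.
  by apply: IH => B hB; apply: hs; rewrite in_cons hB orbT.
Qed.

Lemma sumfam_sumL n (K : 'I_n -> set M) (P : pred 'I_n) (g : 'I_n -> set M) :
  (forall i, P i -> K i `<=` g i) ->
  sumfam K P `<=` sumL [seq g i | i <- index_enum 'I_n & P i].
Proof.
move=> hKg x [f [hf ->]].
rewrite /=.
elim: (index_enum _) => [|i r IH] /=; first by rewrite big_nil.
rewrite big_cons; case: ifP => Pi /=; last exact: IH.
exists (f i), (\sum_(j <- r | P j) f j); split; last by split.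
by apply: hKg => //; apply: hf.
Qed.

Lemma PS_sumL (N : set M) (s : seq (set R)) : PS_hollow N ->
  (forall Q, Q \in s -> is_ideal Q) ->
  N `<=` sumL [seq IM Q | Q <- s] ->
  N `<=` [set 0] \/ exists2 Q, Q \in s & N `<=` IM Q.
Proof.
move=> [hN hPS]; elim: s => [|Q s IH] hs /=; first by left.
move=> hsub.
have hI : is_ideal Q by apply: hs; rewrite mem_head.
have hs' : forall J, J \in s -> is_ideal J by move=> J hJ; apply: hs; rewrite in_cons hJ orbT.
have hL : is_submod (sumL [seq IM Q | Q <- s]).
  by apply: sumL_submod => A /mapP[J /hs' hJ ->]; apply: IM_submod.
case: (hPS Q _ hI hL hsub) => [h|h].
- by right; exists Q => //; rewrite mem_head.
- case: (IH hs' h) => [|[J hJ hNJ]]; first by left.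
  by right; exists J => //; rewrite in_cons hJ orbT.
Qed.


Lemma setI_submod (A B : set M) : is_submod A -> is_submod B -> is_submod (A `&` B).
Proof.
move=> [A0 [AD AZ]] [B0 [BD BZ]]; split; [by []|split].
- by move=> x y [? ?] [? ?]; split; [apply: AD|apply: BD].
- by move=> r x [? ?]; split; [apply: AZ|apply: BZ].
Qed.

Lemma art_min (art : artinian R) (N : set M) (I : set R) :
  A_N N I -> exists J, H_N N J /\ J `<=` I.
Proof.
move=> hAI; apply: contrapT => hno.
pose P := fun J => A_N N J /\ J `<=` I.
have step : forall J, P J -> exists J', P J' /\ J' `<=` J /\ J' <> J.
  move=> J [hA hJI]; apply: contrapT => hne; apply: hno.
  exists J; split => //; split => // J' hA' hJ'.
  apply: contrapT => hneq; apply: hne; exists J'.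
  by split; [split => //; exact: subset_trans hJ' hJI|split].
have [g hg] : {g : set R -> set R &
    forall J, P J -> P (g J) /\ g J `<=` J /\ g J <> J}.
  apply: (@choice (set R) (set R) (fun J J2 => P J -> P J2 /\ J2 `<=` J /\ J2 <> J)) => J.
  case: (pselect (P J)) => [hP|hP].
  - by have [J' ?] := step J hP; exists J'.
  - by exists J.
pose f := fun k => iter k g I.
have hf : forall k, P (f k).
  by elim => [|k IH]; [split|exact: (hg _ IH).1].
have [k hk] := art f (fun k => (hf k).1.1) (fun k => (hg _ (hf k)).2.1).
by apply: (hg _ (hf k)).2.2; exact: (hk k.+1 (leqnSn k)).
Qed.

End Aux.

Theorem corollary5p24 (R : comNzRingType) (M : lmodType R) (n : nat)
    (K : 'I_n -> set M) (H : 'I_n -> set (set R)) :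
  artinian R ->
  (exists m : M, m != 0) ->
  min_PS_hollow_rep K H ->
  (forall i (N : set M), is_submod N -> N `<=` In_ (K i) -> N <> [set 0] ->
     H_PS_hollow (H i) N) ->
  is_direct_sum K.
Proof.
move=> art _ [hsum [hH [hinc _]]] hsubH; split => // j.
have hKsub i : is_submod (K i) by case: (hH i) => [[]].
have hHi i : H_N (K i) = H i by case: (hH i).
have hSsub := sumfam_submod (fun i => i != j) hKsub.
apply/seteqP; split; last first.
  move=> x /= ->; split; first by case: (hKsub j).
  by case: hSsub.
move=> x hx /=; apply: contrapT => hx0.
pose N := K j `&` sumfam K (fun i => i != j).
have hNsub : is_submod N by apply: setI_submod.
have hNIn : N `<=` In_ (K j) by move=> y [hy _] J [[_ hJ] _]; exact: hJ y hy.
have hN0 : N <> [set 0] by move=> e; apply: hx0; have: N x by []; rewrite e.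
have [hPS hHN] := hsubH j N hNsub hNIn hN0.
have [i [hij hall]] : exists i, i != j /\ forall I, H_N (K i) I -> N `<=` IM I.
  apply: contrapT => hno.
  have [c hc] : {c : 'I_n -> set R & forall i, is_ideal (c i) /\
      (i != j -> K i `<=` IM (c i) /\ ~ N `<=` IM (c i))}.
    apply: (@choice 'I_n (set R) (fun i Q => is_ideal Q /\
      (i != j -> K i `<=` IM Q /\ ~ N `<=` IM Q))) => i.
    case: (eqVneq i j) => [->|hij].
      by exists setT; split => //; rewrite eqxx.
    have : ~ (forall I, H_N (K i) I -> N `<=` IM I) by move=> h; apply: hno; exists i.
    move/existsNP => [Q /not_implyP [[[hid hKQ] _] hnot]].
    by exists Q; split.
  have := PS_sumL (s := [seq c i | i <- index_enum 'I_n & i != j]) hPS.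
  case.
  - by move=> Q /mapP[i _ ->]; exact: (hc i).1.
  - rewrite -map_comp => y [_ hy].
    by apply: (sumfam_sumL (g := fun i => IM (c i))) hy => i hi; exact: ((hc i).2 hi).1.
  - by move=> h0; apply: hx0; exact: h0 x hx.
  - move=> [Q /mapP[i]]; rewrite mem_filter => /andP[hij _] -> hNQ.
    by apply: ((hc i).2 hij).2.
apply: (hinc j i); first by rewrite eq_sym.
move=> y hy Q hQ.
have hA : A_N N Q by split; [exact: hQ.1.1|exact: hall Q hQ].
have [J [hJ hJQ]] := art_min art hA.
rewrite hHN -(hHi j) in hJ.
exact: IM_mono hJQ _ (hy J hJ).
Qed.
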